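(* In the setting of the split chain (context), with $N=\sup\{i\in\mathbb{N}\colon mS_{i+1}+m-1\le n\}$ ($\sup\emptyset=0$), if $\|T_1\|_{\psi_1},\|T_2\|_{\psi_1}\le\tau$, then $$\mathbb{P}\big(N>\lfloor 3n/(m\mathbb{E} T_2)\rfloor\big)\le K\exp\Big(-\frac1K\frac{n\mathbb{E} T_2}{m\tau^2}\Big),$$ where $K$ is a universal constant.
   Context: Markov chain $X_1,X_2,\ldots$ on $(\mathcal{S},\mathcal{B})$ satisfying the Minorization condition with parameter $m\ge1$, realized as a split chain $(X_n,R_n)$, $R_n\in\{0,1\}$, with $T_1=\inf\{n>0\colon R_{nm}=1\}$, $T_{i+1}=\inf\{n>0\colon R_{(T_1+\cdots+T_i+n)m}=1\}$, $S_i=T_1+\cdots+T_i$; the $T_i$ are independent positive integer valued and $T_2,T_3,\ldots$ are i.i.d. $\|\cdot\|_{\psi_1}$ is the Orlicz norm with $\psi_1(x)=e^x-1$. *)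

(* Defs.v *)
From Stdlib Require Import Reals Lra Lia List.
Open Scope R_scope.

(* The outcome space is the set of
   sequences t : nat -> nat with t j >= 1 for j >= 1 (t j is the value of T_j,
   index 0 unused).  The T_j are independent, T_1 has law p1 and T_2, T_3, ...
   have common law p2 (probability mass functions on the positive integers). *)

Definition is_pmf_pos (p : nat -> R) : Prop :=
  (forall k, 0 <= p k) /\ p 0%nat = 0 /\ infinite_sum p 1.

Fixpoint sum_1_to (B : nat) (g : nat -> R) : R :=
  match B with
  | O => 0
  | S B' => sum_1_to B' g + g B
  end.

Fixpoint box_sum (L B : nat) (f : list nat -> R) : R :=
  match L with
  | O => f nil
  | S L' => sum_1_to B (fun v => box_sum L' B (fun s => f (v :: s)))
  end.

(* Probability of the cylinder {T_1 = s_1, ..., T_L = s_L}. *)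
Definition cyl_weight (p1 p2 : nat -> R) (s : list nat) : R :=
  match s with
  | nil => 1
  | v :: s' => p1 v * fold_right (fun w acc => p2 w * acc) 1 s'
  end.

Definition cyl_sub (s : list nat) (A : (nat -> nat) -> Prop) : Prop :=
  forall t : nat -> nat,
    (forall j, (1 <= j <= length s)%nat -> t j = nth (j - 1) s 0%nat) ->
    (forall j, (length s < j)%nat -> (1 <= t j)%nat) ->
    A t.

(* x is the probability of a finite disjoint union of cylinders contained in A. *)
Definition cyl_inner (p1 p2 : nat -> R) (A : (nat -> nat) -> Prop) (x : R) : Prop :=
  exists (L B : nat) (c : list nat -> bool),
    (forall s, c s = true -> cyl_sub s A) /\
    x = box_sum L B (fun s => if c s then cyl_weight p1 p2 s else 0).

(* P(A) <= b.  For events A that are (countable) unions of cylinders -- such as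
   the event considered below -- P(A) is the supremum of the cyl_inner values. *)
Definition Prob_le (p1 p2 : nat -> R) (A : (nat -> nat) -> Prop) (b : R) : Prop :=
  forall x, cyl_inner p1 p2 A x -> x <= b.

(* E exp(T / c) <= 2 (nonnegative series: all partial sums bounded by 2). *)
Definition Eexp_le2 (p : nat -> R) (c : R) : Prop :=
  forall M : nat, sum_f_R0 (fun k => p k * exp (INR k / c)) M <= 2.

(* r = ||T||_{psi_1} = inf {c > 0 : E exp(|T|/c) <= 2}, psi_1(x) = e^x - 1. *)
Definition psi1_norm (p : nat -> R) (r : R) : Prop :=
  is_lub (fun y => exists c, 0 < c /\ Eexp_le2 p c /\ y = - c) (- r).

Fixpoint Ssum (t : nat -> nat) (i : nat) : nat :=
  match i with
  | O => O
  | S i' => (Ssum t i' + t i)%nat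
  end.

Definition Nset (m n : nat) (t : nat -> nat) (i : nat) : Prop :=
  (m * Ssum t (S i) + m - 1 <= n)%nat.

Definition is_N (m n : nat) (t : nat -> nat) (N : nat) : Prop :=
  ((forall i, ~ Nset m n t i) /\ N = 0%nat) \/
  (Nset m n t N /\ forall i, Nset m n t i -> (i <= N)%nat).

(* Main.v *)
Require Import Defs.
From Stdlib Require Import Reals ZArith Lra Lia Classical List.
Open Scope R_scope.

Lemma exp_mono x y : x <= y -> exp x <= exp y.
Proof. intros [H|H]; [left; apply exp_increasing; auto | subst; lra]. Qed.

Lemma exp_quad_lower x : 0 <= x -> 1 + x + x^2/4 <= exp x.
Proof.
  intros Hx.
  assert (E: exp x = exp (x/2) * exp (x/2)) by (rewrite <- exp_plus; f_equal; field).
  pose proof (exp_ineq1_le (x/2)). rewrite E. nra.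
Qed.

Lemma exp_neg_upper x : 0 <= x -> exp (- x) <= 1 - x + x^2.
Proof.
  intros Hx. pose proof (exp_quad_lower x Hx).
  assert (E: exp (-x) * exp x = 1) by (rewrite <- exp_plus; replace (-x+x) with 0 by ring; apply exp_0).
  pose proof (exp_pos x). pose proof (exp_pos (-x)).
  assert (Hp: 0 < 1 - x + x^2) by nra.
  assert (H3: (1 - x + x^2) * (1 + x + x^2/4) <= (1 - x + x^2) * exp x) by (apply Rmult_le_compat_l; lra).
  assert (H4: (1 - x + x^2) * (1 + x + x^2/4) = 1 + x^2/4 + 3/4*x^3 + x^4/4) by field.
  assert (0 <= x^3) by (apply pow_le; lra). assert (0 <= x^4) by (apply pow_le; lra).
  assert (0 <= x^2) by (apply pow_le; lra).
  assert (HH5: (1 - x + x^2) * exp x >= 1) by lra.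
  destruct (Rle_dec (exp (-x)) (1 - x + x^2)) as [h|h]; auto.
  assert (exp (-x) * exp x > (1 - x + x^2) * exp x) by (apply Rmult_gt_compat_r; lra). lra.
Qed.

Lemma sq_le_exp x : 0 <= x -> x^2 <= 4 * exp x.
Proof. intros Hx. pose proof (exp_quad_lower x Hx). nra. Qed.

Lemma psum_mono f M d : (forall k, 0 <= f k) -> sum_f_R0 f M <= sum_f_R0 f (M + d).
Proof.
  intros Hf. induction d. rewrite Nat.add_0_r; lra.
  rewrite Nat.add_succ_r. simpl. specialize (Hf (S (M + d))). lra.
Qed.

Lemma psum_mono' f M M' : (forall k, 0 <= f k) -> (M <= M')%nat -> sum_f_R0 f M <= sum_f_R0 f M'.
Proof. intros Hf H. replace M' with (M + (M' - M))%nat by lia. apply psum_mono; auto. Qed.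

Lemma psum_le_lim f l : infinite_sum f l -> (forall k, 0 <= f k) -> forall M, sum_f_R0 f M <= l.
Proof.
  intros Hs Hf M. destruct (Rle_dec (sum_f_R0 f M) l) as [h|h]; auto. exfalso.
  destruct (Hs (sum_f_R0 f M - l)) as [N HN]; [lra|].
  specialize (HN (Nat.max N M) (Nat.le_max_l _ _)).
  pose proof (psum_mono' f M (Nat.max N M) Hf (Nat.le_max_r _ _)).
  unfold Rdist in HN. pose proof (Rle_abs (sum_f_R0 f (Nat.max N M) - l)). lra.
Qed.

Lemma psum_close f l : infinite_sum f l -> forall eps, eps > 0 -> forall B,
  exists M, (B <= M)%nat /\ l - eps < sum_f_R0 f M.
Proof.
  intros Hs eps He B. destruct (Hs eps He) as [N HN].
  exists (Nat.max N B). split; [lia|].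
  specialize (HN (Nat.max N B) (Nat.le_max_l _ _)). unfold Rdist in HN.
  rewrite Rabs_minus_sym in HN. pose proof (Rle_abs (l - sum_f_R0 f (Nat.max N B))). lra.
Qed.

Lemma sum_lin a b d l l2 M :
  sum_f_R0 (fun v => a v - l * b v + l2 * d v) M =
  sum_f_R0 a M - l * sum_f_R0 b M + l2 * sum_f_R0 d M.
Proof. induction M; simpl; [ring|rewrite IHM; ring]. Qed.

Lemma sum_scal a f M : sum_f_R0 (fun v => a * f v) M = a * sum_f_R0 f M.
Proof. induction M; simpl; [ring|rewrite IHM; ring]. Qed.

Lemma s1_f0 B g : sum_1_to B g + g 0%nat = sum_f_R0 g B.
Proof. induction B; simpl; lra. Qed.

Lemma s1_ext B f g : (forall v, f v = g v) -> sum_1_to B f = sum_1_to B g.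
Proof. intros H; induction B; simpl; [lra|rewrite IHB, H; lra]. Qed.

Lemma s1_le B f g : (forall v, f v <= g v) -> sum_1_to B f <= sum_1_to B g.
Proof. intros H; induction B; simpl; [lra|specialize (H (S B)); lra]. Qed.

Lemma s1_scal_r B f a : sum_1_to B (fun v => f v * a) = sum_1_to B f * a.
Proof. induction B; simpl; [ring|rewrite IHB; ring]. Qed.

Lemma s1_scal_l B f a : sum_1_to B (fun v => a * f v) = a * sum_1_to B f.
Proof. induction B; simpl; [ring|rewrite IHB; ring]. Qed.

Lemma s1_nonneg B f : (forall v, 0 <= f v) -> 0 <= sum_1_to B f.
Proof. intros H; induction B; simpl; [lra|specialize (H (S B)); lra]. Qed.

Lemma bs_ext L B f g : (forall s, f s = g s) -> box_sum L B f = box_sum L B g.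
Proof.
  revert f g; induction L; intros f g H; simpl; auto.
  apply s1_ext; intro v; apply IHL; auto.
Qed.

Lemma bs_le L B f g : (forall s, length s = L -> f s <= g s) -> box_sum L B f <= box_sum L B g.
Proof.
  revert f g; induction L; intros f g H; simpl.
  - apply H; reflexivity.
  - apply s1_le; intro v; apply IHL; intros s Hs; apply H; simpl; lia.
Qed.

Lemma bs_scal L B a f : box_sum L B (fun s => a * f s) = a * box_sum L B f.
Proof.
  revert f; induction L; intros f; simpl; auto.
  rewrite <- s1_scal_l. apply s1_ext; intro v. apply (IHL (fun s => f (v :: s))).
Qed.

Lemma bs_zero L B : box_sum L B (fun _ => 0) = 0.
Proof.
  rewrite (bs_ext L B _ (fun s => 0 * 0)) by (intros; ring).
  rewrite (bs_scal L B 0 (fun _ => 0)). ring.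
Qed.

Fixpoint ewg (F : nat -> nat -> R) (j : nat) (s : list nat) : R :=
  match s with nil => 1 | v :: s' => F j v * ewg F (S j) s' end.

Fixpoint prodsum (F : nat -> nat -> R) (B j L : nat) : R :=
  match L with O => 1 | S L' => sum_1_to B (F j) * prodsum F B (S j) L' end.

Lemma bs_ewg F B L : forall j, box_sum L B (ewg F j) = prodsum F B j L.
Proof.
  induction L; intros j; simpl; auto.
  rewrite (s1_ext B _ (fun v => F j v * prodsum F B (S j) L)).
  apply s1_scal_r.
  intro v. rewrite (bs_scal L B (F j v) (ewg F (S j))). rewrite IHL. reflexivity.
Qed.

Lemma ps_nonneg F B L : (forall j v, 0 <= F j v) -> forall j, 0 <= prodsum F B j L.
Proof.
  intros H; induction L; intros j; simpl; [lra|].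
  apply Rmult_le_pos; auto. apply s1_nonneg; auto.
Qed.

Lemma ps_bound F B q K : 0 <= q -> (forall j v, 0 <= F j v) ->
  (forall j, (2 <= j <= K)%nat -> sum_1_to B (F j) <= q) ->
  (forall j, (K < j)%nat -> sum_1_to B (F j) <= 1) ->
  forall L j, (2 <= j)%nat -> (K < j + L)%nat -> prodsum F B j L <= q ^ (K + 1 - j).
Proof.
  intros Hq HF H1 H2. induction L; intros j Hj HjL; simpl.
  - replace (K + 1 - j)%nat with 0%nat by lia. simpl; lra.
  - pose proof (s1_nonneg B (F j) (HF j)).
    pose proof (ps_nonneg F B L HF (S j)).
    specialize (IHL (S j) ltac:(lia) ltac:(lia)).
    destruct (Nat.le_gt_cases j K).
    + replace (K + 1 - j)%nat with (S (K + 1 - S j)) by lia. simpl.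
      apply Rmult_le_compat; auto.
    + replace (K + 1 - j)%nat with 0%nat by lia.
      replace (K + 1 - S j)%nat with 0%nat in IHL by lia. simpl in *.
      specialize (H2 j H3). nra.
Qed.

Lemma pmf_le1 p : is_pmf_pos p -> forall M, sum_f_R0 p M <= 1.
Proof. intros [H0 [_ Hs]] M. apply psum_le_lim; auto. Qed.

Lemma AL p c mu lam : is_pmf_pos p -> 0 < c -> Eexp_le2 p c ->
  infinite_sum (fun k => INR k * p k) mu -> 0 <= lam ->
  forall B, sum_1_to B (fun v => p v * exp (-(lam * INR v))) <= 1 - lam * mu + lam^2 * (8 * c^2).
Proof.
  intros Hp Hc HE Hmu Hl B.
  destruct Hp as [Hnn [Hp0 Hs1]].
  apply Rnot_gt_le; intro Hgt.
  set (X := sum_1_to B (fun v => p v * exp (-(lam * INR v)))) in *.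
  set (e := (X - (1 - lam * mu + lam ^ 2 * (8 * c ^ 2))) / (2 * (lam + 1))).
  assert (He: e > 0) by (unfold e; apply Rdiv_lt_0_compat; lra).
  assert (Hle: lam * e <= (X - (1 - lam * mu + lam ^ 2 * (8 * c ^ 2))) / 2).
  { unfold e. apply Rle_trans with ((lam + 1) * ((X - (1 - lam * mu + lam ^ 2 * (8 * c ^ 2))) / (2 * (lam + 1)))).
    apply Rmult_le_compat_r; [left; apply Rdiv_lt_0_compat; lra | lra].
    right; field; lra. }
  destruct (psum_close _ _ Hmu e He B) as [M [HBM HM]].
  assert (HX: X <= sum_f_R0 (fun v => p v * exp (-(lam * INR v))) M).
  { pose proof (s1_f0 B (fun v => p v * exp (-(lam * INR v)))) as Hf. fold X in Hf. cbv beta in Hf.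
    rewrite Hp0 in Hf. rewrite Rmult_0_l, Rplus_0_r in Hf. rewrite Hf. apply psum_mono'; auto.
    intro k; apply Rmult_le_pos; [apply Hnn|left; apply exp_pos]. }
  assert (HY: sum_f_R0 (fun v => p v * exp (-(lam * INR v))) M <=
     sum_f_R0 (fun v => p v - lam * (INR v * p v) + lam^2 * (p v * INR v ^ 2)) M).
  { apply sum_Rle. intros v _.
    assert (0 <= lam * INR v) by (apply Rmult_le_pos; [lra|apply pos_INR]).
    pose proof (exp_neg_upper _ H). pose proof (Hnn v).
    apply Rle_trans with (p v * (1 - lam * INR v + (lam * INR v)^2)).
    apply Rmult_le_compat_l; auto. right; ring. }
  rewrite sum_lin in HY.
  pose proof (psum_le_lim _ _ Hs1 Hnn M) as HP.
  assert (HQ: sum_f_R0 (fun v => p v * INR v ^ 2) M <= 8 * c^2).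
  { apply Rle_trans with (sum_f_R0 (fun v => (4 * c^2) * (p v * exp (INR v / c))) M).
    - apply sum_Rle. intros v _.
      assert (0 <= INR v / c) by (unfold Rdiv; apply Rmult_le_pos; [apply pos_INR|left; apply Rinv_0_lt_compat; lra]).
      pose proof (sq_le_exp _ H). pose proof (Hnn v).
      assert (INR v ^ 2 = c^2 * (INR v / c)^2) by (field; lra).
      rewrite H2.
      assert (0 < c^2) by (apply pow_lt; lra).
      assert (c^2 * (INR v / c)^2 <= c^2 * (4 * exp (INR v / c))) by (apply Rmult_le_compat_l; lra).
      nra.
    - rewrite sum_scal. specialize (HE M). assert (0 < c^2) by (apply pow_lt; lra). nra. }
  assert (0 <= lam^2) by (apply pow_le; lra).
  assert (lam * (mu - e) <= lam * sum_f_R0 (fun v => INR v * p v) M) by (apply Rmult_le_compat_l; lra).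
  assert (lam^2 * sum_f_R0 (fun v => p v * INR v ^ 2) M <= lam^2 * (8 * c^2)) by (apply Rmult_le_compat_l; lra).
  lra.
Qed.

Lemma c_ge1 p c : is_pmf_pos p -> 0 < c -> Eexp_le2 p c -> 1 <= c.
Proof.
  intros Hp Hc HE. destruct Hp as [Hnn [Hp0 Hs1]].
  apply Rnot_lt_le; intro Hlt.
  assert (Hc1: 1 < 1 / c) by (apply (Rmult_lt_reg_r c); [lra|]; field_simplify; lra).
  pose proof (exp_ineq1 1 ltac:(lra)).
  pose proof (exp_mono _ _ (Rlt_le _ _ Hc1)).
  set (E := exp (1 / c)) in *.
  destruct (psum_close _ _ Hs1 (1 - 2 / E) ltac:(apply Rlt_gt; apply Rlt_Rminus;
     apply (Rmult_lt_reg_r E); [lra|]; field_simplify; lra) 0%nat) as [M [_ HM]].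
  specialize (HE M).
  assert (E * sum_f_R0 p M <= sum_f_R0 (fun k => p k * exp (INR k / c)) M).
  { rewrite <- sum_scal. apply sum_Rle. intros v _. destruct v.
    - rewrite Hp0. lra.
    - pose proof (Hnn (S v)). rewrite Rmult_comm. apply Rmult_le_compat_l; auto.
      unfold E. apply exp_mono. unfold Rdiv. apply Rmult_le_compat_r.
      left; apply Rinv_0_lt_compat; lra. rewrite S_INR; pose proof (pos_INR v); lra. }
  assert (E * (2 / E) = 2) by (field; lra).
  assert (E * (1 - (1 - 2/E)) < E * sum_f_R0 p M) by (apply Rmult_lt_compat_l; lra).
  nra.
Qed.

Lemma get_c p r : is_pmf_pos p -> psi1_norm p r ->
  exists c, 0 < c /\ Eexp_le2 p c /\ c <= 2 * r /\ 1 <= r.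
Proof.
  intros Hp [Hub Hleast].
  assert (Hr: 1 <= r).
  { assert (- r <= -1); [|lra]. apply Hleast. intros y [c [Hc [HE ->]]].
    pose proof (c_ge1 p c Hp Hc HE). lra. }
  destruct (classic (exists y, (exists c, 0 < c /\ Eexp_le2 p c /\ y = - c) /\ y > - r - 1)) as [[y [[c [Hc [HE ->]]] Hy]]|Hn].
  - exists c; repeat split; auto; lra.
  - exfalso. assert (- r <= - r - 1); [|lra]. apply Hleast. intros y Hy.
    apply Rnot_gt_le; intro Hg. apply Hn; exists y; auto.
Qed.

Lemma mu_pos p mu : is_pmf_pos p -> infinite_sum (fun k => INR k * p k) mu -> 0 < mu.
Proof.
  intros Hp Hmu. destruct Hp as [Hnn [Hp0 Hs1]].
  destruct (psum_close _ _ Hs1 (1/2) ltac:(lra) 0%nat) as [M [_ HM]].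
  assert (sum_f_R0 p M <= sum_f_R0 (fun k => INR k * p k) M).
  { apply sum_Rle. intros v _. destruct v. rewrite Hp0; simpl; lra.
    pose proof (Hnn (S v)). rewrite S_INR; pose proof (pos_INR v). nra. }
  assert (sum_f_R0 (fun k => INR k * p k) M <= mu).
  { apply psum_le_lim; auto. intro k; apply Rmult_le_pos; [apply pos_INR|apply Hnn]. }
  lra.
Qed.

Definition Fw (p1 p2 : nat -> R) (lam : R) (K j v : nat) : R :=
  (if Nat.eqb j 1 then p1 v else p2 v) * (if Nat.leb j K then exp (-(lam * INR v)) else 1).

Fixpoint sumk (K j : nat) (s : list nat) : nat :=
  match s with nil => 0%nat | v :: s' => ((if Nat.leb j K then v else 0) + sumk K (S j) s')%nat end.

Definition tof (s : list nat) (n : nat) : nat -> nat :=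
  fun j => if Nat.leb j (length s) then nth (j - 1) s 0%nat else S n.

Lemma EW p1 p2 lam K : forall s j, (2 <= j)%nat ->
  ewg (Fw p1 p2 lam K) j s =
  fold_right (fun w acc => p2 w * acc) 1 s * exp (-(lam * INR (sumk K j s))).
Proof.
  induction s as [|v s IH]; intros j Hj; simpl.
  - rewrite Rmult_0_r, Ropp_0, exp_0. ring.
  - rewrite IH by lia. unfold Fw.
    destruct (Nat.eqb_spec j 1); [lia|].
    rewrite plus_INR. destruct (Nat.leb j K).
    + replace (-(lam * (INR v + INR (sumk K (S j) s)))) with
        (-(lam * INR v) + -(lam * INR (sumk K (S j) s))) by ring.
      rewrite exp_plus. ring.
    + simpl INR. rewrite Rplus_0_l. ring.
Qed.

Lemma EW1 p1 p2 lam K s : (1 <= K)%nat ->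
  ewg (Fw p1 p2 lam K) 1 s = cyl_weight p1 p2 s * exp (-(lam * INR (sumk K 1 s))).
Proof.
  intros HK. destruct s as [|v s]; simpl.
  - rewrite Rmult_0_r, Ropp_0, exp_0. ring.
  - rewrite EW by lia. unfold Fw. simpl.
    destruct K; [lia|]. simpl Nat.leb. rewrite plus_INR.
    replace (-(lam * (INR v + INR (sumk (S K) 2 s)))) with
        (-(lam * INR v) + -(lam * INR (sumk (S K) 2 s))) by ring.
    rewrite exp_plus. ring.
Qed.

Lemma Ssum_mono t a b : (a <= b)%nat -> (Ssum t a <= Ssum t b)%nat.
Proof.
  induction b; intros H. replace a with 0%nat by lia; lia.
  destruct (Nat.eq_dec a (S b)). subst; lia. simpl. specialize (IHb ltac:(lia)). lia.
Qed.

Lemma SK t K : forall s j, (1 <= j)%nat ->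
  (forall i, (i < length s)%nat -> t (j + i)%nat = nth i s 0%nat) ->
  (sumk K j s + Ssum t (Nat.min (j - 1) K) <= Ssum t K)%nat.
Proof.
  induction s as [|v s IH]; intros j Hj Ht; simpl.
  - apply Ssum_mono; lia.
  - specialize (IH (S j) ltac:(lia)).
    assert (Htj: t j = v) by (rewrite <- (Nat.add_0_r j); apply (Ht 0%nat); simpl; lia).
    assert (IH' : (sumk K (S j) s + Ssum t (Nat.min j K) <= Ssum t K)%nat).
    { replace j with (S j - 1)%nat at 2 by lia. apply IH. intros i Hi.
      replace (S j + i)%nat with (j + S i)%nat by lia. apply (Ht (S i)). simpl; lia. }
    destruct (Nat.leb_spec j K).
    + replace (Nat.min (j - 1) K) with (j - 1)%nat by lia.
      replace (Nat.min j K) with j in IH' by lia.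
      destruct j as [|j']; [lia|]. simpl Ssum in IH'.
      replace (S j' - 1)%nat with j' by lia. lia.
    + replace (Nat.min (j - 1) K) with K by lia.
      replace (Nat.min j K) with K in IH' by lia. lia.
Qed.

Lemma event_bound m n t I : (1 <= m)%nat -> (0 <= I)%Z ->
  (exists N, is_N m n t N /\ (Z.of_nat N > I)%Z) ->
  (m * Ssum t (S (S (Z.to_nat I))) <= n)%nat.
Proof.
  intros Hm HI [N [[[_ HN]|[HN _]] HZ]].
  - subst. simpl in HZ. lia.
  - unfold Nset in HN.
    assert (S (Z.to_nat I) <= N)%nat by lia.
    pose proof (Ssum_mono t (S (S (Z.to_nat I))) (S N) ltac:(lia)).
    pose proof (Nat.mul_le_mono_l _ _ m H0). lia.
Qed.

Lemma cw_nonneg p1 p2 s : (forall k, 0 <= p1 k) -> (forall k, 0 <= p2 k) -> 0 <= cyl_weight p1 p2 s.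
Proof.
  intros H1 H2. destruct s as [|v s]; simpl; [lra|].
  apply Rmult_le_pos; auto. induction s; simpl; [lra|]. apply Rmult_le_pos; auto.
Qed.

Lemma exp_pow x k : exp x ^ k = exp (INR k * x).
Proof.
  induction k; simpl. rewrite Rmult_0_l, exp_0; auto.
  rewrite IHk, <- exp_plus. f_equal. destruct k; simpl; ring.
Qed.

Theorem mainTheorem6 :
  exists K : R, 0 < K /\
  forall (m n : nat) (p1 p2 : nat -> R) (tau mu : R),
    (1 <= m)%nat ->
    is_pmf_pos p1 -> is_pmf_pos p2 ->
    (exists r1, psi1_norm p1 r1 /\ r1 <= tau) ->
    (exists r2, psi1_norm p2 r2 /\ r2 <= tau) ->
    infinite_sum (fun k => INR k * p2 k) mu ->     (* mu = E T_2 *)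
    Prob_le p1 p2
      (fun t => exists N, is_N m n t N /\
          (Z.of_nat N > Int_part (3 * INR n / (INR m * mu)))%Z)
      (K * exp (- (1 / K) * (INR n * mu / (INR m * tau ^ 2)))).
Proof.
  exists 128. split; [lra|].
  intros m n p1 p2 tau mu Hm Hp1 Hp2 _ [r2 [Hr2 Htau2]] Hmu.
  destruct (get_c p2 r2 Hp2 Hr2) as [c [Hc0 [HcE [Hcr Hr1]]]].
  assert (Htau: 1 <= tau) by lra. assert (Hct: c <= 2 * tau) by lra.
  pose proof (mu_pos p2 mu Hp2 Hmu) as Hmu0.
  assert (Hm0: 0 < INR m) by (apply lt_0_INR; lia).
  pose proof (pos_INR n) as Hn0.
  set (x := 3 * INR n / (INR m * mu)).
  assert (Hx0: 0 <= x) by (unfold x; unfold Rdiv; apply Rmult_le_pos; [lra|left; apply Rinv_0_lt_compat; nra]).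
  set (I := Int_part x).
  destruct (base_Int_part x) as [HI1 HI2]. fold I in HI1, HI2.
  assert (HI: (0 <= I)%Z) by (apply le_IZR; apply Rnot_lt_le; intro h;
     assert (IZR I <= -1) by (apply IZR_le; apply lt_IZR in h; lia); lra).
  set (k := S (Z.to_nat I)). set (K := S k).
  assert (Hk: INR k = IZR I + 1).
  { unfold k. rewrite S_INR, INR_IZR_INZ, Z2Nat.id; auto. }
  set (lam := mu / (64 * tau^2)).
  assert (Htsq: 0 < tau ^ 2) by (apply pow_lt; lra).
  assert (Hlam: 0 < lam) by (unfold lam; apply Rdiv_lt_0_compat; lra).
  set (a := INR n / INR m).
  set (F := Fw p1 p2 lam K).
  destruct Hp1 as [Hnn1 [Hp10 Hs1]] eqn:EHp1. destruct Hp2 as [Hnn2 [Hp20 Hs2]] eqn:EHp2.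
  intros y [L [B [cc [Hcc Hy]]]]. subst y.
  assert (Hpos: 0 < 128 * exp (- (1 / 128) * (INR n * mu / (INR m * tau ^ 2))))
    by (apply Rmult_lt_0_compat; [lra|apply exp_pos]).
  assert (Hev: forall s, cc s = true -> (m * Ssum (tof s n) K <= n)%nat).
  { intros s E. apply (event_bound m n (tof s n) I Hm HI).
    apply (Hcc s E). intros j Hj. unfold tof. destruct (Nat.leb_spec j (length s)); auto; lia.
    intros j Hj. unfold tof. destruct (Nat.leb_spec j (length s)); lia. }
  destruct (Nat.le_gt_cases L k) as [HL|HL].
  - eapply Rle_trans. apply bs_le with (g := fun _ => 0).
    2: rewrite bs_zero; lra.
    intros s Hs. destruct (cc s) eqn:E; [|lra]. exfalso.
    specialize (Hev s E).
    assert (HS: (tof s n K <= Ssum (tof s n) K)%nat) by (unfold K; simpl; lia).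
    assert (HT: tof s n K = S n) by (unfold tof; destruct (Nat.leb_spec K (length s)); [unfold K in *; lia|reflexivity]).
    revert Hev HS. rewrite HT. generalize (Ssum (tof s n) K). intros z Hz1 Hz2. nia.
  - eapply Rle_trans. apply bs_le with (g := fun s => exp (lam * a) * ewg F 1 s).
    { intros s _. assert (HF1 := EW1 p1 p2 lam K s ltac:(unfold K; lia)). fold F in HF1.
      destruct (cc s) eqn:E.
      - specialize (Hev s E).
        assert (Hsk := SK (tof s n) K s 1 ltac:(lia)).
        assert (Hsk' : (sumk K 1 s <= Ssum (tof s n) K)%nat).
        { assert (Hti: forall i, (i < length s)%nat -> tof s n (1 + i)%nat = nth i s 0%nat).
          { intros i Hi. change (1 + i)%nat with (S i). unfold tof. destruct (Nat.leb_spec (S i) (length s)); [|lia].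
            replace (S i - 1)%nat with i by lia. reflexivity. }
          specialize (Hsk Hti). replace (Nat.min (1 - 1) K) with 0%nat in Hsk by lia. change (Ssum (tof s n) 0) with 0%nat in Hsk. lia. }
        assert (Hma: (m * sumk K 1 s <= n)%nat) by nia.
        apply le_INR in Hma. rewrite mult_INR in Hma.
        assert (Hsa: INR (sumk K 1 s) <= a).
        { unfold a. apply (Rmult_le_reg_l (INR m)); auto. field_simplify; lra. }
        rewrite HF1. pose proof (cw_nonneg p1 p2 s Hnn1 Hnn2).
        assert (1 <= exp (lam * a) * exp (-(lam * INR (sumk K 1 s)))).
        { rewrite <- exp_plus, <- exp_0. apply exp_mono. nra. }
        nra.
      - apply Rmult_le_pos; [left; apply exp_pos|]. rewrite HF1.
        apply Rmult_le_pos; [apply cw_nonneg; auto|left; apply exp_pos]. }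
    rewrite bs_scal, bs_ewg.
    destruct L as [|L']; [lia|]. simpl prodsum.
    assert (HFnn: forall j v, 0 <= F j v).
    { intros j v. unfold F, Fw. apply Rmult_le_pos.
      destruct (Nat.eqb j 1); auto. destruct (Nat.leb j K); [left; apply exp_pos|lra]. }
    set (q := exp (-(lam * mu / 2))).
    assert (HF1s: sum_1_to B (F 1%nat) <= 1).
    { apply Rle_trans with (sum_1_to B p1).
      - apply s1_le. intro v. unfold F, Fw. replace (Nat.leb 1 K) with true by (symmetry; apply Nat.leb_le; unfold K; lia). simpl Nat.eqb.
        pose proof (Hnn1 v). assert (exp (-(lam * INR v)) <= 1).
        { rewrite <- exp_0. apply exp_mono. pose proof (pos_INR v). nra. }
        nra.
      - pose proof (s1_f0 B p1). rewrite Hp10 in H. pose proof (pmf_le1 p1 Hp1 B). lra. }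
    assert (Hps: prodsum F B 2 L' <= q ^ (K + 1 - 2)).
    { apply ps_bound; auto.
      - left; apply exp_pos.
      - intros j Hj. rewrite (s1_ext B _ (fun v => p2 v * exp (-(lam * INR v)))).
        2: { intro v. unfold F, Fw. destruct (Nat.eqb_spec j 1); [lia|].
             destruct (Nat.leb_spec j K); [reflexivity|lia]. }
        eapply Rle_trans. apply (AL p2 c mu lam Hp2 Hc0 HcE Hmu (Rlt_le _ _ Hlam)).
        assert (lam^2 * (8 * c^2) <= lam^2 * (32 * tau^2)).
        { apply Rmult_le_compat_l. apply pow_le; lra. nra. }
        assert (E32: lam^2 * (32 * tau^2) = lam * mu / 2) by (unfold lam; field; lra).
        unfold q. pose proof (exp_ineq1_le (-(lam * mu / 2))). lra.
      - intros j Hj. rewrite (s1_ext B _ p2).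
        2: { intro v. unfold F, Fw. destruct (Nat.eqb_spec j 1); [lia|].
             destruct (Nat.leb_spec j K); [lia|]. ring. }
        pose proof (s1_f0 B p2). rewrite Hp20 in H. pose proof (pmf_le1 p2 Hp2 B). lra.
      - lia. }
    replace (K + 1 - 2)%nat with k in Hps by (unfold K; lia).
    unfold q in Hps. rewrite exp_pow in Hps.
    pose proof (ps_nonneg F B L' HFnn 2).
    pose proof (s1_nonneg B (F 1%nat) (HFnn 1%nat)).
    assert (sum_1_to B (F 1%nat) * prodsum F B 2 L' <= exp (INR k * - (lam * mu / 2))).
    { apply Rle_trans with (1 * prodsum F B 2 L'). apply Rmult_le_compat_r; auto. lra. }
    assert (Hkm: 3 * a <= INR k * mu).
    { assert (x < INR k) by lra. unfold x in H2.
      assert (3 * INR n / (INR m * mu) * mu <= INR k * mu) by (apply Rmult_le_compat_r; lra).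
      unfold a. replace (3 * (INR n / INR m)) with (3 * INR n / (INR m * mu) * mu) by (field; lra). lra. }
    apply Rle_trans with (exp (lam * a) * exp (INR k * - (lam * mu / 2))).
    { apply Rmult_le_compat_l; [left; apply exp_pos|auto]. }
    rewrite <- exp_plus.
    apply Rle_trans with (1 * exp (- (1 / 128) * (INR n * mu / (INR m * tau ^ 2)))).
    2: { apply Rmult_le_compat_r; [left; apply exp_pos|lra]. }
    rewrite Rmult_1_l. apply exp_mono.
    assert (E1: - (1 / 128) * (INR n * mu / (INR m * tau ^ 2)) = - (lam * a / 2)) by (unfold lam, a; field; lra).
    rewrite E1. nra.
Qed.
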